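(* Let $W:\Omega^2\to[0,1]$ be a graphon and $F$ a graph on vertex set $[k]$. Suppose that $\mathfrak{c}:\Omega\to[0,1]$ is a fractional $F$-cover of $W$ and that $\mathfrak{t}:\Omega^k\to[0,1]$ is an $F$-tiling in $W$. Then $\|\mathfrak{t}\|\le\|\mathfrak{c}\|$.
   Context: $(\Omega,\nu)$ is an atomless Borel probability space; a graphon is a symmetric measurable $W:\Omega^2\to[0,1]$. $W^{\otimes F}(x_1,\dots,x_k)=\prod_{ij\in E(F),i<j}W(x_i,x_j)$ and $\mathcal{F}_F(W)=\{W^{\otimes F}\neq0\}$. An $F$-tiling in $W$ is a measurable $\mathfrak{t}:\Omega^k\to[0,\infty)$ with $\{\mathfrak{t}\neq0\}\subset\mathcal{F}_F(W)$ such that for each $x\in\Omega$, $\sum_{\ell=1}^k\int\mathfrak{t}(x_1,\dots,x_{\ell-1},x,x_{\ell+1},\dots,x_k)\,\mathrm{d}\nu^{k-1}\le1$ (integrating over all coordinates except the $\ell$-th); its size is $\|\mathfrak{t}\|=\int\mathfrak{t}\,\mathrm{d}\nu^k$. A fractional $F$-cover of $W$ is a measurable $\mathfrak{c}:\Omega\to[0,1]$ with $\nu^k\big(\mathcal{F}_F(W)\cap\{(x_1,\dots,x_k):\sum_{i=1}^k\mathfrak{c}(x_i)<1\}\big)=0$; its size is $\|\mathfrak{c}\|=\int\mathfrak{c}\,\mathrm{d}\nu$. *)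

(* Defs.v *)
From HB Require Import structures.
From mathcomp Require Import all_boot all_order all_algebra.
From mathcomp Require Import all_classical all_reals all_analysis.
Set Implicit Arguments. Unset Strict Implicit. Unset Printing Implicit Defensive.
Import Order.TTheory GRing.Theory Num.Theory.
Local Open Scope classical_set_scope.
Local Open Scope ring_scope.

Section graphon_defs.
Context {d : measure_display} {T : measurableType d} {R : realType}.

(** The k-fold product measure nu^k on Omega^k = k.-tuple T (product
    sigma-algebra, from MathComp-Analysis), built by iterating the binary
    product measure: nu^0 is the Dirac mass at the empty tuple and
    nu^(k+1)(A) = (nu x nu^k)({(x,s) | x :: s \in A}). *)
Local Unset Implicit Arguments.
Fixpoint prod_meas (mu : set T -> \bar R) (k : nat) : set (k.-tuple T) -> \bar R :=
  match k return set (k.-tuple T) -> \bar R with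
  | 0 => fun A => ((\1_A [tuple]) : R)%:E
  | k'.+1 => fun A =>
      (mu \x prod_meas mu k')%E
        ((fun p : T * k'.-tuple T => [tuple of p.1 :: p.2]) @^-1` A)
  end.
Local Set Implicit Arguments.

Definition graph_tensor (k : nat) (F : rel 'I_k) (W : T -> T -> R)
    (x : k.-tuple T) : R :=
  \prod_(i < k) \prod_(j < k | (i < j)%N && F i j) W (tnth x i) (tnth x j).

Definition support_F (k : nat) (F : rel 'I_k) (W : T -> T -> R) :
    set (k.-tuple T) :=
  [set x | graph_tensor F W x != 0].

Definition insert_at (k : nat) (l : 'I_k) (x : T) (s : (k.-1).-tuple T) :
    k.-tuple T :=
  [tuple (if (i < l)%N then nth x s i
          else if i == l :> nat then x else nth x s i.-1) | i < k].

Definition graphon (mu : set T -> \bar R) (W : T -> T -> R) : Prop :=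
  [/\ measurable_fun [set: T * T] (fun p => W p.1 p.2),
      (forall x y, W x y = W y x) &
      (forall x y, 0 <= W x y <= 1)].

Definition F_tiling (mu : set T -> \bar R) (k : nat) (F : rel 'I_k)
    (W : T -> T -> R) (t : k.-tuple T -> R) : Prop :=
  [/\ measurable_fun [set: k.-tuple T] t,
      (forall x, 0 <= t x),
      [set x | t x != 0] `<=` support_F F W &
      (forall x : T,
        (\sum_(l < k)
            \int[prod_meas mu k.-1]_s (t (insert_at l x s))%:E <= 1)%E)].

Definition tiling_size (mu : set T -> \bar R) (k : nat)
    (t : k.-tuple T -> R) : \bar R :=
  (\int[prod_meas mu k]_x (t x)%:E)%E.

Definition fractional_F_cover (mu : set T -> \bar R) (k : nat)
    (F : rel 'I_k) (W : T -> T -> R) (c : T -> R) : Prop :=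
  [/\ measurable_fun [set: T] c,
      (forall x, 0 <= c x <= 1) &
      prod_meas mu k
        (support_F F W `&` [set x | \sum_(i < k) c (tnth x i) < 1]) = 0%E].

Definition cover_size (mu : set T -> \bar R) (c : T -> R) : \bar R :=
  (\int[mu]_x (c x)%:E)%E.

End graphon_defs.

Definition standard_borel {d : measure_display} (T : measurableType d)
    (R : realType) : Prop :=
  exists (B : set R) (f : T -> R) (g : R -> T),
    [/\ measurable B, measurable_fun [set: T] f, measurable_fun B g,
        (forall x, B (f x) /\ g (f x) = x) &
        (forall y, B y -> f (g y) = y)].

Definition atomless {d : measure_display} {T : measurableType d}
    {R : realType} (mu : set T -> \bar R) : Prop :=
  forall A : set T, measurable A -> (0 < mu A)%E ->
    exists2 B : set T, measurable B /\ B `<=` A &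
      (0 < mu B)%E /\ (mu B < mu A)%E.

(* Main.v *)
Require Import Defs.
From HB Require Import structures.
From mathcomp Require Import all_boot all_order all_algebra.
From mathcomp Require Import all_classical all_reals all_analysis.
From mathcomp Require Import measurable_realfun.
Import Order.TTheory GRing.Theory Num.Theory.
Local Open Scope classical_set_scope.
Local Open Scope ring_scope.

Section S.
Context (d : measure_display) (T : measurableType d) (R : realType) (nu : probability T R).

Lemma mcons k : measurable_fun [set: (T * k.-tuple T)%type]
   (fun p : (T * k.-tuple T)%type => [tuple of p.1 :: p.2]).
Proof. exact: measurable_cons. Qed.

Definition consf k : {mfun (T * k.-tuple T)%type >-> k.+1.-tuple T} :=
  HB.pack (fun p : (T * k.-tuple T)%type => [tuple of p.1 :: p.2]) (isMeasurableFun.Build _ _ _ _ _ (mcons k)).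

Lemma PkE k : {P : probability (k.-tuple T) R | forall A, P A = prod_meas nu k A}.
Proof.
elim: k => [|k [P PE]].
  by exists (\d_[tuple] : probability _ R) => A.
exists (distribution (nu \x P)%E (consf k)) => A.
rewrite /distribution /pushforward /=.
congr (product_measure1 _ _ _).
by apply/funext => B; rewrite PE.
Qed.
Local Open Scope ereal_scope.
Definition PM k := proj1_sig (PkE k).
Lemma PME k : (PM k : set _ -> \bar R) = prod_meas nu k.
Proof. by apply/funext => A; rewrite /PM; case: (PkE k). Qed.

Lemma PMS k : (PM k.+1 : set _ -> \bar R) = pushforward (nu \x PM k) (consf k).
Proof.
apply/funext => A; rewrite PME /= /pushforward PME //.
Qed.

Lemma int_PMS k (f : k.+1.-tuple T -> \bar R) : measurable_fun [set: k.+1.-tuple T] f -> (forall x, 0 <= f x) ->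
  \int[PM k.+1]_x f x = \int[nu]_x \int[PM k]_s f (consf k (x, s)).
Proof.
move=> mf f0.
rewrite PMS (@ge0_integral_pushforward _ _ _ _ _ (consf k) (mcons k) (nu \x PM k)%E setT f) //.
rewrite preimage_setT (fubini_tonelli1 (f \o consf k)) //.
- exact: measurableT_comp.
- by move=> x; exact: f0.
Qed.

Lemma measurable_nth {d1} (U : measurableType d1) k (g : U -> T) (h : U -> k.-tuple T) j :
  measurable_fun setT g -> measurable_fun setT h ->
  measurable_fun setT (fun u => nth (g u) (h u) j).
Proof.
move=> mg mh.
have [jk|jk] := ltnP j k.
  rewrite (_ : (fun u => _) = (fun u => tnth (h u) (Ordinal jk))); last first.
    by apply/funext => u; rewrite (tnth_nth (g u)).
  exact: (measurableT_comp (measurable_tnth (Ordinal jk)) mh).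
rewrite (_ : (fun u => _) = g) //.
by apply/funext => u; rewrite nth_default // size_tuple.
Qed.

Lemma measurable_insert {d1} (U : measurableType d1) k (l : 'I_k) (g : U -> T)
  (h : U -> (k.-1).-tuple T) :
  measurable_fun setT g -> measurable_fun setT h ->
  measurable_fun setT (fun u => insert_at l (g u) (h u)).
Proof.
move=> mg mh; apply/measurable_fun_tnthP => i /=.
rewrite (_ : _ \o _ = fun u => (if (i < l)%N then nth (g u) (h u) i
          else if i == l :> nat then g u else nth (g u) (h u) i.-1)); last first.
  by apply/funext => u /=; rewrite /insert_at tnth_mktuple.
case: (i < l)%N; first exact: measurable_nth.
case: (i == l :> nat); first exact: mg.
exact: measurable_nth.
Qed.

Lemma insert0 k (x : T) (s : k.-tuple T) :
  insert_at (ord0 : 'I_k.+1) x s = consf k (x, s).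
Proof.
apply: eq_from_tnth => i; rewrite /insert_at tnth_mktuple /= (tnth_nth x) /=.
by case: i => [[|i] Hi].
Qed.

Lemma insertS n (l : 'I_n.+2) (l' : 'I_n.+1) (ll : nat_of_ord l = l'.+1) (x y : T)
  (s : n.-tuple T) :
  insert_at l x (consf n (y, s)) = consf n.+1 (y, insert_at l' x s).
Proof.
apply: eq_from_tnth => i; rewrite /insert_at tnth_mktuple /= (tnth_nth x) /=.
case: i => [[|j] Hj] /=; first by rewrite ll.
have jn : (j < size (enum 'I_n.+1))%N by rewrite size_enum_ord.
rewrite ll ltnS eqSS (nth_map ord0 _ _ jn) nth_enum_ord -?size_enum_ord //.
case: ifP => // jl; case: ifP => // jl2.
by case: j jl jl2 {Hj jn} => [|j] //=; case: (nat_of_ord l').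
Qed.

Lemma int_insert0 n (f : n.+1.-tuple T -> \bar R) :
  measurable_fun [set: n.+1.-tuple T] f -> (forall x, 0 <= f x) ->
  \int[PM n.+1]_x f x = \int[nu]_x \int[PM n]_s f (insert_at ord0 x s).
Proof.
move=> mf f0; rewrite int_PMS //.
by apply: eq_integral => x _; apply: eq_integral => s _; rewrite insert0.
Qed.

Lemma int_insert n (l : 'I_n.+1) (f : n.+1.-tuple T -> \bar R) :
  measurable_fun [set: n.+1.-tuple T] f -> (forall x, 0 <= f x) ->
  \int[PM n.+1]_x f x = \int[nu]_x \int[PM n]_s f (insert_at l x s).
Proof.
elim: n l f => [|n IH] l f mf f0.
  have -> : l = ord0 by apply/val_inj; case: l => [[]].
  exact: int_insert0.
have [->|l0] := eqVneq l ord0; first exact: int_insert0.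
have lp : (l.-1 < n.+1)%N.
  by case: l l0 => [[|m] Hm] //= _; rewrite -ltnS.
pose l' := Ordinal lp.
have ll : nat_of_ord l = l'.+1.
  by rewrite /= prednK // lt0n; apply: contra l0 => /eqP h; apply/eqP/val_inj.
rewrite int_PMS //.
transitivity (\int[nu]_y \int[nu]_x \int[PM n]_s
   f (consf n.+1 (y, insert_at l' x s))).
  apply: eq_integral => y _; apply: IH.
    apply: measurableT_comp mf _.
    exact: (measurable_cons (measurable_cst y) (@measurable_id _ _ setT)).
  by move=> u; exact: f0.
transitivity (\int[nu]_x \int[nu]_y \int[PM n]_s
   f (consf n.+1 (y, insert_at l' x s))); last first.
  apply: eq_integral => x _; rewrite int_PMS //.
  - apply: eq_integral => y _; apply: eq_integral => s _.
    by rewrite (@insertS n l l' ll).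
  - apply: measurableT_comp mf _.
    have H := @measurable_insert _ [the measurableType _ of (n.+1).-tuple T] _ l (fun=> x) (fun s : (n.+1).-tuple T => s) (measurable_cst x) (@measurable_id _ _ setT). exact: H.
pose G := fun p : (T * T * n.-tuple T)%type =>
   f (consf n.+1 (p.1.1, insert_at l' p.1.2 p.2)).
have mG : measurable_fun setT G.
  apply: measurableT_comp mf _.
  apply: measurable_cons; first exact: (measurableT_comp measurable_fst measurable_fst).
  apply: measurable_insert => //; exact: (measurableT_comp measurable_snd measurable_fst).
have := @fubini_tonelli _ _ _ _ _ nu nu (fubini_F (PM n) G)
   (measurable_fun_fubini_tonelli_F G mG (fun _ => f0 _)).
apply => x; apply: integral_ge0 => s _; exact: f0.
Qed.

Lemma tnth_insert n (l : 'I_n) x (s : (n.-1).-tuple T) : tnth (insert_at l x s) l = x.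
Proof. by rewrite /insert_at tnth_mktuple ltnn eqxx. Qed.
End S.

Lemma mbig_prod d1 (U : measurableType d1) (R : realType) (I : Type) (r : seq I) (P : pred I)
  (g : I -> U -> R) :
  (forall i, measurable_fun setT (g i)) ->
  measurable_fun setT (fun u => \prod_(i <- r | P i) g i u).
Proof.
move=> mg; elim: r => [|a r IH].
  under eq_fun do rewrite big_nil.
  exact: measurable_cst.
under eq_fun do rewrite big_cons.
case: (P a) => //; exact: measurable_funM.
Qed.

Lemma mbig_sum d1 (U : measurableType d1) (R : realType) (I : Type) (r : seq I) (P : pred I)
  (g : I -> U -> R) :
  (forall i, measurable_fun setT (g i)) ->
  measurable_fun setT (fun u => \sum_(i <- r | P i) g i u).
Proof.
move=> mg; elim: r => [|a r IH].
  under eq_fun do rewrite big_nil.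
  exact: measurable_cst.
under eq_fun do rewrite big_cons.
case: (P a) => //; exact: measurable_funD.
Qed.


Theorem proposition4p1 (d : measure_display) (T : measurableType d)
    (R : realType) (nu : probability T R)
    (Hborel : standard_borel T R) (Hatomless : atomless nu)
    (W : T -> T -> R) (HW : graphon nu W)
    (k : nat) (F : rel 'I_k) (Fsym : symmetric F) (Firr : irreflexive F)
    (c : T -> R) (Hc : fractional_F_cover nu F W c)
    (t : k.-tuple T -> R) (Ht : F_tiling nu F W t)
    (Ht1 : forall x, t x <= 1) :
  (tiling_size nu t <= cover_size nu c)%E.
Proof.
case: Hc => mc c01 Hc0; case: Ht => mt t0 tsupp tsum.
have mW : measurable_fun setT (fun p : (T * T)%type => W p.1 p.2) by case: HW.
have mg : measurable_fun setT (graph_tensor F W).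
  apply: mbig_prod => i; apply: mbig_prod => j.
  exact: (measurableT_comp mW (measurable_fun_pair (measurable_tnth i) (measurable_tnth j))).
have ms : measurable_fun setT (fun x : k.-tuple T => \sum_(i < k) c (tnth x i)).
  apply: mbig_sum => i; exact: measurableT_comp mc (measurable_tnth i).
set S := (support_F F W `&` [set x | (\sum_(i < k) c (tnth x i) < 1)%R]) in Hc0.
have mS : measurable S.
  apply: measurableI.
    rewrite (_ : support_F F W = graph_tensor F W @^-1` (~` [set 0%R])); last first.
      by apply/funext => x /=; apply/propext; split => /eqP.
    rewrite -[X in measurable X]setTI; apply: mg => //; exact: measurableC.
  rewrite (_ : [set x | _] = (fun x : k.-tuple T => \sum_(i < k) c (tnth x i)) @^-1` `]-oo, 1[); last first.
    by apply/funext => x /=; rewrite in_itv.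
  rewrite -[X in measurable X]setTI; apply: ms => //; exact: measurable_itv.
destruct k as [|n].
  exfalso; move: Hc0 => /=.
  have HS : S [tuple].
    split; rewrite /support_F /graph_tensor /= ?big_ord0 //; exact: oner_neq0.
  by rewrite indicE (mem_set HS) => -[] /eqP; rewrite oner_eq0.
rewrite /tiling_size /cover_size -(@PME _ _ _ nu).
rewrite -(@PME _ _ _ nu) in tsum.
rewrite -(@PME _ _ _ nu) in Hc0.
Local Open Scope ereal_scope.
have mti i : measurable_fun setT (fun x : (n.+1).-tuple T => (t x * c (tnth x i))%:E).
  apply/measurable_EFinP; apply: measurable_funM => //.
  exact: measurableT_comp mc (measurable_tnth i).
have ti0 i x : 0 <= (t x * c (tnth x i))%:E.
  by rewrite lee_fin mulr_ge0 // (andP (c01 _)).1.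
have step1 : \int[PM _ _ _ nu n.+1]_x (t x)%:E <=
    \int[PM _ _ _ nu n.+1]_x (t x * \sum_(i < n.+1) c (tnth x i))%:E.
  apply: ae_ge0_le_integral => //.
  - by move=> x _; rewrite lee_fin.
  - exact/measurable_EFinP.
  - by move=> x _; rewrite lee_fin mulr_ge0 // sumr_ge0 // => i _; rewrite (andP (c01 _)).1.
  - by apply/measurable_EFinP; apply: measurable_funM.
  exists S; split => // x /= Hx.
  apply: contrapT => nS; apply: Hx => _; rewrite lee_fin.
  have [->|tn0] := eqVneq (t x) 0%R; first by rewrite mul0r.
  have sx : support_F F W x by apply: tsupp.
  have : ~ (\sum_(i < n.+1) c (tnth x i) < 1)%R by move=> h; apply: nS; split.
  move/negP; rewrite -leNgt => h1.
  exact: ler_peMr (t0 x) h1.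
have step2 : \int[PM _ _ _ nu n.+1]_x (t x * \sum_(i < n.+1) c (tnth x i))%:E =
    \sum_(i < n.+1) \int[PM _ _ _ nu n.+1]_x (t x * c (tnth x i))%:E.
  under eq_integral => x _ do rewrite mulr_sumr -sumEFin.
  by rewrite ge0_integral_sum.
pose g (i : 'I_n.+1) y := \int[PM _ _ _ nu n]_s (t (insert_at i y s))%:E.
have g0 i y : 0 <= g i y by apply: integral_ge0 => s _; rewrite lee_fin.
have mgi i : measurable_fun setT (g i).
  have mf : measurable_fun setT
      (fun p : (T * n.-tuple T)%type => (t (insert_at i p.1 p.2))%:E).
    apply/measurable_EFinP; apply: measurableT_comp mt _.
    exact: measurable_insert.
  exact: (@measurable_fun_fubini_tonelli_F _ _ _ _ _ (PM _ _ _ nu n) _ mf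
     (fun p => ltac:(by rewrite lee_fin))).
have step3 i : \int[PM _ _ _ nu n.+1]_x (t x * c (tnth x i))%:E =
    \int[nu]_y ((c y)%:E * g i y).
  rewrite (@int_insert _ _ _ nu n i) //.
  apply: eq_integral => y _; rewrite /g -ge0_integralZl_EFin //.
  - by apply: eq_integral => s _; rewrite tnth_insert EFinM muleC.
  - by move=> s _; rewrite lee_fin.
  - apply/measurable_EFinP; apply: measurableT_comp mt _.
    have H := @measurable_insert _ _ _ [the measurableType _ of n.-tuple T] _ i (fun=> y) (fun s : n.-tuple T => s) (measurable_cst y) (@measurable_id _ _ setT). exact: H.
  - by rewrite (andP (c01 _)).1.
rewrite (le_trans step1) // step2 (eq_bigr _ (fun i _ => step3 i)).
rewrite -ge0_integral_sum //; last first.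
  - by move=> i y _; rewrite mule_ge0 // lee_fin (andP (c01 _)).1.
  - by move=> i; apply: emeasurable_funM => //; exact/measurable_EFinP.
apply: ge0_le_integral => //.
- by move=> y _; rewrite sume_ge0 // => i _; rewrite mule_ge0 // lee_fin (andP (c01 _)).1.
- by apply: emeasurable_sum => i; apply: emeasurable_funM => //; exact/measurable_EFinP.
- exact/measurable_EFinP.
move=> y _; rewrite -ge0_sume_distrr // -[leRHS]mule1.
apply: lee_wpmul2l; first by rewrite lee_fin (andP (c01 _)).1.
exact: tsum.
Qed.
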